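(* Let $\mathsf{L}$ be an intermediate logic with $\mathsf{ND}\subseteq\mathsf{L}$. Then its negative variant $\mathsf{L}^\neg$ is $\mathcal{ST}$-hereditarily structurally complete, where $\mathcal{ST}$ is the class of all substitutions stable in $\mathsf{L}^\neg$. In particular, $\mathsf{ND}^\neg$, $\mathsf{KP}^\neg$ and $\mathsf{ML}^\neg$ are $\mathcal{ST}$-hereditarily structurally complete.
   Context: Formulas are those of intuitionistic propositional logic, built from propositional variables, $\bot,\top$ with $\wedge,\vee,\to$; $\neg\phi:=\phi\to\bot$. An intermediate theory is a set $\mathsf{T}$ of formulas closed under modus ponens with $\mathsf{IPC}\subseteq\mathsf{T}\subseteq\mathsf{CPC}$; an intermediate logic is an intermediate theory closed under uniform substitution. For an intermediate theory $\mathsf{T}$, $\Gamma\vdash_{\mathsf T}\phi$ means $\phi$ is derivable from $\Gamma\cup\mathsf{T}$ by modus ponens, and $\vdash_{\mathsf T}\phi$ means $\phi\in\mathsf T$. A substitution is a map on formulas commuting with connectives and constants. $\mathsf{ND}$ (Maksimova's logic) is the intermediate logic axiomatized over $\mathsf{IPC}$ by all substitution instances of $(\neg p\to\bigvee_{i=1}^k\neg q_i)\to\bigvee_{i=1}^k(\neg p\to\neg q_i)$, $k\ge1$; $\mathsf{KP}$ is Kreisel–Putnam logic and $\mathsf{ML}$ is Medvedev's logic (both extend $\mathsf{ND}$). For an intermediate logic $\mathsf{L}$, $\phi^\neg$ is the result of replacing each propositional variable $p$ in $\phi$ by $\neg p$, and $\mathsf{L}^\neg=\{\phi\mid\phi^\neg\in\mathsf{L}\}$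 (an intermediate theory). A substitution $\sigma$ is stable in $\mathsf{L}^\neg$ if $\vdash_{\mathsf{L}^\neg}\sigma(p)\leftrightarrow\neg\neg\sigma(p)$ for every propositional variable $p$. For an intermediate theory $\mathsf T$ and a set $\mathcal S$ of substitutions under which $\vdash_{\mathsf T}$ is closed (i.e. $\phi\vdash_{\mathsf T}\psi$ implies $\sigma(\phi)\vdash_{\mathsf T}\sigma(\psi)$ for $\sigma\in\mathcal S$), $\mathsf T$ is $\mathcal S$-structurally complete if for all formulas $\phi,\psi$: whenever $\vdash_{\mathsf T}\sigma(\phi)$ implies $\vdash_{\mathsf T}\sigma(\psi)$ for all $\sigma\in\mathcal S$, then $\phi\vdash_{\mathsf T}\psi$. $\mathsf T$ is $\mathcal S$-hereditarily structurally complete if every intermediate theory $\mathsf T'\supseteq\mathsf T$ such that $\vdash_{\mathsf T'}$ is closed under all $\sigma\in\mathcal S$ is $\mathcal S$-structurally complete. *)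

(* Defs.v *)
From mathcomp Require Import all_boot.
Set Implicit Arguments. Unset Strict Implicit. Unset Printing Implicit Defensive.

Inductive form : Type :=
| Var : nat -> form
| Bot : form
| Top : form
| And : form -> form -> form
| Or  : form -> form -> form
| Imp : form -> form -> form.

Definition Neg (a : form) : form := Imp a Bot.
Definition Iff (a b : form) : form := And (Imp a b) (Imp b a).

Definition fset := form -> Prop.

Definition substitution := nat -> form.
Fixpoint subst (s : substitution) (f : form) : form :=
  match f with
  | Var n => s n
  | Bot => Bot
  | Top => Top
  | And a b => And (subst s a) (subst s b)
  | Or a b => Or (subst s a) (subst s b)
  | Imp a b => Imp (subst s a) (subst s b)
  end.

Inductive IPC : fset :=
| ipc_k a b : IPC (Imp a (Imp b a))
| ipc_s a b c : IPC (Imp (Imp a (Imp b c)) (Imp (Imp a b) (Imp a c)))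
| ipc_and1 a b : IPC (Imp (And a b) a)
| ipc_and2 a b : IPC (Imp (And a b) b)
| ipc_andI a b : IPC (Imp a (Imp b (And a b)))
| ipc_or1 a b : IPC (Imp a (Or a b))
| ipc_or2 a b : IPC (Imp b (Or a b))
| ipc_orE a b c : IPC (Imp (Imp a c) (Imp (Imp b c) (Imp (Or a b) c)))
| ipc_efq a : IPC (Imp Bot a)
| ipc_top : IPC Top
| ipc_mp a b : IPC (Imp a b) -> IPC a -> IPC b.

Fixpoint beval (v : nat -> bool) (f : form) : bool :=
  match f with
  | Var n => v n
  | Bot => false
  | Top => true
  | And a b => beval v a && beval v b
  | Or a b => beval v a || beval v b
  | Imp a b => beval v a ==> beval v b
  end.
Definition CPC : fset := fun f => forall v, beval v f = true.

Definition intermediate_theory (T : fset) : Prop :=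
  [/\ (forall a b, T (Imp a b) -> T a -> T b),
      (forall f, IPC f -> T f) &
      (forall f, T f -> CPC f)].

Definition intermediate_logic (L : fset) : Prop :=
  intermediate_theory L /\ (forall s f, L f -> L (subst s f)).

Inductive derives (T Gamma : fset) : form -> Prop :=
| der_hyp f : Gamma f -> derives T Gamma f
| der_thm f : T f -> derives T Gamma f
| der_mp a b : derives T Gamma (Imp a b) -> derives T Gamma a -> derives T Gamma b.

Definition single (f : form) : fset := fun g => g = f.

Inductive axiomatized (Ax : fset) : fset :=
| ax_ipc f : IPC f -> axiomatized Ax f
| ax_inst s f : Ax f -> axiomatized Ax (subst s f)
| ax_mp a b : axiomatized Ax (Imp a b) -> axiomatized Ax a -> axiomatized Ax b.

Fixpoint bigOr (x : form) (l : list form) : form :=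
  match l with
  | nil => x
  | y :: l' => Or x (bigOr y l')
  end.

(* ND_k, k >= 1: (¬p -> ¬q_1 ∨ ... ∨ ¬q_k) -> (¬p -> ¬q_1) ∨ ... ∨ (¬p -> ¬q_k),
   with p = Var 0 and q_i = Var i *)
Definition ND_axiom (k : nat) : form :=
  let p := Var 0 in
  let qs := [seq Var i.+1 | i <- iota 1 k.-1] in
  Imp (Imp (Neg p) (bigOr (Neg (Var 1)) [seq Neg q | q <- qs]))
      (bigOr (Imp (Neg p) (Neg (Var 1))) [seq Imp (Neg p) (Neg q) | q <- qs]).

Definition ND_axioms : fset := fun f => exists k, 1 <= k /\ f = ND_axiom k.
Definition ND : fset := axiomatized ND_axioms.

Definition KP_axiom : form :=
  Imp (Imp (Neg (Var 0)) (Or (Var 1) (Var 2)))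
      (Or (Imp (Neg (Var 0)) (Var 1)) (Imp (Neg (Var 0)) (Var 2))).
Definition KP : fset := axiomatized (single KP_axiom).

(* Medvedev's logic: formulas valid on all Medvedev frames, i.e. the posets of
   nonempty subsets of a finite set 'I_n ordered by reverse inclusion,
   under intuitionistic Kripke semantics with persistent valuations. *)
Fixpoint mforces (n : nat) (V : nat -> {set 'I_n} -> Prop) (x : {set 'I_n})
    (f : form) : Prop :=
  match f with
  | Var k => V k x
  | Bot => False
  | Top => True
  | And a b => mforces V x a /\ mforces V x b
  | Or a b => mforces V x a \/ mforces V x b
  | Imp a b => forall y : {set 'I_n}, y != set0 -> y \subset x ->
                 mforces V y a -> mforces V y b
  end.

Definition persistent (n : nat) (V : nat -> {set 'I_n} -> Prop) : Prop :=
  forall k (x y : {set 'I_n}), x != set0 -> y != set0 -> y \subset x ->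
    V k x -> V k y.

Definition ML : fset := fun f =>
  forall (n : nat) (V : nat -> {set 'I_n} -> Prop), persistent V ->
    forall x : {set 'I_n}, x != set0 -> mforces V x f.

Definition neg_sub : substitution := fun p => Neg (Var p).
Definition neg_variant (L : fset) : fset := fun f => L (subst neg_sub f).

Definition stable_in (T : fset) (s : substitution) : Prop :=
  forall p, T (Iff (s p) (Neg (Neg (s p)))).

Definition subst_class := substitution -> Prop.

Definition closed_under (T : fset) (S : subst_class) : Prop :=
  forall s, S s -> forall a b,
    derives T (single a) b -> derives T (single (subst s a)) (subst s b).

Definition structurally_complete (T : fset) (S : subst_class) : Prop :=
  forall a b, (forall s, S s -> T (subst s a) -> T (subst s b)) ->
    derives T (single a) b.

Definition hereditarily_structurally_complete (T : fset) (S : subst_class) : Prop :=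
  forall T' : fset, intermediate_theory T' -> (forall f, T f -> T' f) ->
    closed_under T' S -> structurally_complete T' S.

(* Main.v *)
Require Import Defs.
From mathcomp Require Import all_boot.
From Stdlib Require Import ClassicalEpsilon.
Require Stdlib.Lists.List.
Set Implicit Arguments. Unset Strict Implicit. Unset Printing Implicit Defensive.

Notation In := List.In.

Fixpoint imps (G : seq form) (f : form) : form :=
  match G with [::] => f | g :: G' => imps G' (Imp g f) end.

Lemma ipcI a : IPC (Imp a a).
Proof. exact: ipc_mp (ipc_mp (ipc_s a (Imp a a) a) (ipc_k a (Imp a a))) (ipc_k a a). Qed.

Lemma ipcB p q r : IPC (Imp p q) -> IPC (Imp q r) -> IPC (Imp p r).
Proof. move=> Hpq Hqr.
exact: ipc_mp (ipc_mp (ipc_s p q r) (ipc_mp (ipc_k (Imp q r) p) Hqr)) Hpq. Qed.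

Lemma ipc_lift t G : IPC (Imp t (imps G t)).
Proof. elim: G t => [|g G IH] t /=; first exact: ipcI.
exact: ipcB (ipc_k t g) (IH (Imp g t)). Qed.

Lemma ipc_mpl G a b : IPC (Imp (imps G (Imp a b)) (Imp (imps G a) (imps G b))).
Proof. elim: G a b => [|g G IH] a b /=; first exact: ipcI.
have H1 := ipc_mp (ipc_lift _ G) (ipc_s g a b).
have H2 := ipc_mp (IH _ _) H1.
exact: ipcB H2 (IH _ _). Qed.

Definition thy (T : fset) := (forall f, IPC f -> T f) /\ (forall a b, T (Imp a b) -> T a -> T b).

Lemma thy_IPC : thy IPC. Proof. by split=> //; apply: ipc_mp. Qed.

Lemma thy_mpl T G a b : thy T -> T (imps G (Imp a b)) -> T (imps G a) -> T (imps G b).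
Proof. case=> Hi Hm H1 H2. apply: (Hm _ _ _ H2). apply: (Hm _ _ _ H1). exact: Hi _ (ipc_mpl G a b). Qed.

Lemma thy_lift T G t : thy T -> T t -> T (imps G t).
Proof. case=> Hi Hm H. apply: (Hm _ _ _ H). exact: Hi _ (ipc_lift t G). Qed.

Lemma in_imps G f : In f G -> IPC (imps G f).
Proof. elim: G => [|g G IH] //= [->|H].
  exact: thy_lift thy_IPC (ipcI f).
exact: thy_mpl thy_IPC (thy_lift _ thy_IPC (ipc_k f g)) (IH H). Qed.

Inductive nd (T : fset) : seq form -> form -> Prop :=
| nd_hyp G f : In f G -> nd T G f
| nd_thm G f : T f -> nd T G f
| nd_impI G a b : nd T (a :: G) b -> nd T G (Imp a b)
| nd_impE G a b : nd T G (Imp a b) -> nd T G a -> nd T G b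
| nd_andI G a b : nd T G a -> nd T G b -> nd T G (And a b)
| nd_andE1 G a b : nd T G (And a b) -> nd T G a
| nd_andE2 G a b : nd T G (And a b) -> nd T G b
| nd_orI1 G a b : nd T G a -> nd T G (Or a b)
| nd_orI2 G a b : nd T G b -> nd T G (Or a b)
| nd_orE G a b c : nd T G (Or a b) -> nd T (a :: G) c -> nd T (b :: G) c -> nd T G c
| nd_botE G a : nd T G Bot -> nd T G a
| nd_topI G : nd T G Top.
Arguments nd_hyp {T G f}.
Arguments nd_thm {T G f}.
Arguments nd_topI {T G}.

Lemma nd_sound T G f : thy T -> nd T G f -> T (imps G f).
Proof. move=> hT; have [Hi Hm] := hT. elim=> {G f}.
- by move=> G f H; apply: Hi; apply: in_imps.
- by move=> G f H; apply: thy_lift.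
- by [].
- by move=> G a b _ H1 _ H2; apply: thy_mpl H1 H2.
- move=> G a b _ H1 _ H2; apply: thy_mpl _ H2 => //.
  apply: thy_mpl H1 => //; apply: thy_lift => //; apply: Hi; apply: ipc_andI.
- move=> G a b _ H; apply: thy_mpl H => //; apply: thy_lift => //; apply: Hi; apply: ipc_and1.
- move=> G a b _ H; apply: thy_mpl H => //; apply: thy_lift => //; apply: Hi; apply: ipc_and2.
- move=> G a b _ H; apply: thy_mpl H => //; apply: thy_lift => //; apply: Hi; apply: ipc_or1.
- move=> G a b _ H; apply: thy_mpl H => //; apply: thy_lift => //; apply: Hi; apply: ipc_or2.
- move=> G a b c _ H _ H1 _ H2 /=; apply: thy_mpl H => //.
  rewrite /= in H1 H2.
  apply: (thy_mpl (a := Imp b c)) H2 => //; apply: (thy_mpl (a := Imp a c)) H1 => //.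
  apply: thy_lift => //; apply: Hi; apply: ipc_orE.
- move=> G a _ H; apply: thy_mpl H => //; apply: thy_lift => //; apply: Hi; apply: ipc_efq.
- move=> G; apply: thy_lift => //; apply: Hi; apply: ipc_top.
Qed.

Lemma nd_sound0 T f : thy T -> nd T [::] f -> T f.
Proof. exact: nd_sound. Qed.

Lemma nd_weak T G f : nd T G f -> forall D, (forall g, In g G -> In g D) -> nd T D f.
Proof. elim=> {G f}.
- by move=> G f H D HD; apply: nd_hyp; auto.
- by move=> G f H D HD; apply: nd_thm.
- move=> G a b _ IH D HD; apply: nd_impI; apply: IH => g /= [->|H]; auto.
- move=> G a b _ IH1 _ IH2 D HD; apply: nd_impE (IH1 D HD) (IH2 D HD).
- move=> G a b _ IH1 _ IH2 D HD; apply: nd_andI (IH1 D HD) (IH2 D HD).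
- move=> G a b _ IH D HD; apply: nd_andE1 (IH D HD).
- move=> G a b _ IH D HD; apply: nd_andE2 (IH D HD).
- move=> G a b _ IH D HD; apply: nd_orI1 (IH D HD).
- move=> G a b _ IH D HD; apply: nd_orI2 (IH D HD).
- move=> G a b c _ IH _ IH1 _ IH2 D HD; apply: nd_orE (IH D HD) _ _.
  + apply: IH1 => g /= [->|H]; auto.
  + apply: IH2 => g /= [->|H]; auto.
- move=> G a _ IH D HD; apply: nd_botE (IH D HD).
- move=> G D _; apply: nd_topI.
Qed.

Lemma wk T G h f : nd T G f -> nd T (h :: G) f.
Proof. move=> H; apply: (nd_weak H) => g /=; auto. Qed.

Lemma wk0 T G f : nd T [::] f -> nd T G f.
Proof. move=> H; apply: (nd_weak H) => g []. Qed.

Ltac hyp := apply: nd_hyp; simpl; auto 10.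

Lemma nd_cut T G a b : nd T G a -> nd T (a :: G) b -> nd T G b.
Proof. move=> H1 H2; exact: nd_impE (nd_impI H2) H1. Qed.

Lemma in_map_seq (A B : Type) (f : A -> B) l z : In z l -> In (f z) (map f l).
Proof. elim: l => [|x l IH] //= [->|H]; auto. Qed.

Lemma in_map_inv (A B : Type) (f : A -> B) l w : In w (map f l) -> exists z, In z l /\ w = f z.
Proof. elim: l => [|x l IH] //= [<-|H]; first by exists x; auto.
by have [z [H1 H2]] := IH H; exists z; auto. Qed.

Lemma in_cat (A : Type) (l1 l2 : seq A) z : In z (l1 ++ l2) <-> In z l1 \/ In z l2.
Proof. elim: l1 => [|x l IH] /=; first tauto. rewrite IH; tauto. Qed.

Lemma bigOr_I T G h l z : In z (h :: l) -> nd T G z -> nd T G (bigOr h l).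
Proof. elim: l h => [|y l IH] h /=.
  by case=> // <-.
case=> [<- H|H1 H2]; first exact: nd_orI1.
by apply: nd_orI2; apply: IH H1 H2. Qed.

Lemma bigOr_E T G h l c : nd T G (bigOr h l) ->
  (forall z, In z (h :: l) -> nd T (z :: G) c) -> nd T G c.
Proof. elim: l h G => [|y l IH] h G /= H Hz.
  by apply: nd_cut H (Hz _ _); left.
apply: nd_orE H _ _; first by apply: Hz; left.
apply: IH; first by hyp.
move=> z Hz'. apply: (nd_weak (Hz z _)); last by move=> g /=; tauto.
by right. Qed.

Definition dis (l : seq form) : form := foldr Or Bot l.

Lemma dis_I T G l z : In z l -> nd T G z -> nd T G (dis l).
Proof. elim: l => [|y l IH] //= [<- H|H1 H2]; first exact: nd_orI1.
by apply: nd_orI2; apply: IH H1 H2. Qed.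

Lemma dis_E T G l c : nd T G (dis l) ->
  (forall z, In z l -> nd T (z :: G) c) -> nd T G c.
Proof. elim: l G => [|y l IH] G /= H Hz; first exact: nd_botE.
apply: nd_orE H _ _; first by apply: Hz; left.
apply: IH; first by hyp.
move=> z Hz'. apply: (nd_weak (Hz z _)); last by move=> g /=; tauto.
by right. Qed.

Fixpoint negf (f : form) : Prop :=
  match f with
  | Or _ _ => False
  | And a b | Imp a b => negf a /\ negf b
  | _ => True
  end.

Fixpoint vars (f : form) : seq nat :=
  match f with
  | Var p => [:: p]
  | And a b | Or a b | Imp a b => vars a ++ vars b
  | _ => [::]
  end.

Definition stabT (T : fset) := forall p, T (Iff (Var p) (Neg (Neg (Var p)))).

Ltac use X := apply: (nd_impE (a := X)).

Lemma neg_stable T G h : stabT T -> negf h -> nd T G (Imp (Neg (Neg h)) h).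
Proof. move=> HT; elim: h G => [p|||a IHa b IHb|a IHa b IHb|a IHa b IHb] G //= Hn.
- apply: (nd_andE2 (a := Imp (Var p) (Neg (Neg (Var p))))); apply: nd_thm; exact: HT p.
- apply: nd_impI; use (Neg Bot); [hyp | apply: nd_impI; hyp].
- by apply: nd_impI; apply: nd_topI.
- case: Hn => Ha Hb; apply: nd_impI; apply: nd_andI.
  + use (Neg (Neg a)); first exact: IHa. apply: nd_impI.
    use (Neg (And a b)); first hyp.
    apply: nd_impI; use a; first hyp.
    apply: nd_andE1; hyp.
  + use (Neg (Neg b)); first exact: IHb. apply: nd_impI.
    use (Neg (And a b)); first hyp.
    apply: nd_impI; use b; first hyp.
    apply: nd_andE2; hyp.
- case: Hn => Ha Hb; apply: nd_impI; apply: nd_impI.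
  use (Neg (Neg b)); first exact: IHb. apply: nd_impI.
  use (Neg (Imp a b)); first hyp.
  apply: nd_impI; use b; first hyp.
  use a; hyp.
Qed.

Definition lit (v : nat -> bool) (p : nat) : form := if v p then Var p else Neg (Var p).

Lemma kalmar T v h G : negf h -> (forall p, In p (vars h) -> In (lit v p) G) ->
  nd T G (if beval v h then h else Neg h).
Proof.
elim: h G => [p|||a IHa b IHb|a IHa b IHb|a IHa b IHb] G //= Hn HG.
- by apply: nd_hyp; apply: HG; left.
- by apply: nd_impI; hyp.
- exact: nd_topI.
- case: Hn => Ha Hb.
  have {IHa}IHa := IHa G Ha (fun p Hp => HG p (proj2 (in_cat _ _ _) (or_introl Hp))).
  have {IHb}IHb := IHb G Hb (fun p Hp => HG p (proj2 (in_cat _ _ _) (or_intror Hp))).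
  case: (beval v a) IHa => IHa; case: (beval v b) IHb => IHb /=.
  + exact: nd_andI.
  + apply: nd_impI; apply: nd_impE (wk _ IHb) _; apply: nd_andE2; hyp.
  + apply: nd_impI; apply: nd_impE (wk _ IHa) _; apply: nd_andE1; hyp.
  + apply: nd_impI; apply: nd_impE (wk _ IHa) _; apply: nd_andE1; hyp.
- case: Hn => Ha Hb.
  have {IHa}IHa := IHa G Ha (fun p Hp => HG p (proj2 (in_cat _ _ _) (or_introl Hp))).
  have {IHb}IHb := IHb G Hb (fun p Hp => HG p (proj2 (in_cat _ _ _) (or_intror Hp))).
  case: (beval v a) IHa => IHa; case: (beval v b) IHb => IHb /=.
  + by apply: nd_impI; apply: wk.
  + apply: nd_impI; apply: nd_impE (wk _ IHb) _.
    apply: nd_impE (nd_hyp _) (wk _ IHa); simpl; auto.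
  + by apply: nd_impI; apply: wk.
  + apply: nd_impI; apply: nd_botE; apply: nd_impE (wk _ IHa) _; hyp.
Qed.

Definition addlits (v : nat -> bool) (ps : seq nat) (G : seq form) :=
  foldr (fun p acc => lit v p :: acc) G ps.

Lemma lits_in v ps G p : In p ps -> In (lit v p) (addlits v ps G).
Proof. elim: ps => [|q ps IH] //= [->|H]; auto. Qed.

Lemma lits_ext v w ps G : (forall n, In n ps -> v n = w n) -> addlits v ps G = addlits w ps G.
Proof. elim: ps => [|q ps IH] //= H. rewrite /lit H /=; last by left.
by rewrite IH // => n Hn; apply: H; right. Qed.

Lemma lits_elim T c ps G : (forall D, nd T D (Imp (Neg (Neg c)) c)) ->
  (forall v, nd T (addlits v ps G) c) -> nd T G c.
Proof.
move=> Hst; elim: ps => [|p ps IH] H; first exact: H (fun _ => false).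
apply: IH => v.
case: (List.in_dec PeanoNat.Nat.eq_dec p ps) => Hp.
  apply: (nd_weak (H v)) => g /= [<-|Hg] //; exact: lits_in.
pose D := addlits v ps G.
have H1 : nd T (Var p :: D) c.
  have := H (fun n => if n == p then true else v n).
  rewrite /= /lit eqxx (@lits_ext _ v) //.
  by move=> n Hn; case: eqP => // E; subst n.
have H0 : nd T (Neg (Var p) :: D) c.
  have := H (fun n => if n == p then false else v n).
  rewrite /= /lit eqxx (@lits_ext _ v) //.
  by move=> n Hn; case: eqP => // E; subst n.
apply: nd_impE (Hst D) _; apply: nd_impI.
use c; first hyp.
apply: (nd_cut (a := Neg (Var p))).
  apply: nd_impI; use c; first hyp.
  by apply: (nd_weak H1) => g /=; tauto.
by apply: (nd_weak H0) => g /=; tauto.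
Qed.

Lemma neg_complete T h : thy T -> stabT T -> negf h -> (forall v, beval v h = true) -> T h.
Proof.
move=> hT HS Hn Hv; apply: nd_sound0 => //.
apply: (@lits_elim _ _ (vars h)); first by move=> D; apply: neg_stable.
move=> v; have := @kalmar T v h (addlits v (vars h) [::]) Hn (fun p Hp => lits_in _ _ Hp).
by rewrite Hv.
Qed.

Lemma subst_comp s t f : subst s (subst t f) = subst (fun n => subst s (t n)) f.
Proof. by elim: f => //= [a -> b ->|a -> b ->|a -> b ->]. Qed.

Lemma subst_bigOr s h l : subst s (bigOr h l) = bigOr (subst s h) (map (subst s) l).
Proof. by elim: l h => //= y l IH h; rewrite IH. Qed.

Lemma beval_ext v w f : (forall n, v n = w n) -> beval v f = beval w f.
Proof. by move=> H; elim: f => //= [a -> b ->|a -> b ->|a -> b ->]. Qed.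

Lemma beval_subst v s f : beval v (subst s f) = beval (fun n => beval v (s n)) f.
Proof. by elim: f => //= [a -> b ->|a -> b ->|a -> b ->]. Qed.

Definition GF (X Y : form) (l : seq form) : form :=
  Imp (Imp (Neg X) (bigOr (Neg Y) [seq Neg q | q <- l]))
      (bigOr (Imp (Neg X) (Neg Y)) [seq Imp (Neg X) (Neg q) | q <- l]).

Lemma ND_GF_eq s k : subst s (ND_axiom k) =
  GF (s 0) (s 1) [seq subst s q | q <- [seq Var i.+1 | i <- iota 1 k.-1]].
Proof.
rewrite /ND_axiom /GF /= !subst_bigOr /= -!map_comp.
by congr (Imp (Imp _ (bigOr _ _)) (bigOr _ _)); apply: eq_map.
Qed.

Lemma GF_inst X Y l : exists s k, 1 <= k /\ subst s (ND_axiom k) = GF X Y l.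
Proof.
exists (fun n => match n with 0 => X | j.+1 => nth Bot (Y :: l) j end), (size l).+1.
split => //; rewrite ND_GF_eq /=; congr GF.
rewrite -map_comp /=.
have -> : [seq (subst (fun n => match n with 0 => X | j.+1 => nth Bot (Y :: l) j end) \o
             (fun i : nat => Var i.+1)) i | i <- iota 1 (size l)]
          = [seq nth Bot (Y :: l) i | i <- iota 1 (size l)] by apply: eq_map.
by rewrite map_nth_iota /= ?subn1 // drop0 take_size.
Qed.

Lemma ND_step T G x y ys : stabT T -> (forall X Y l, T (GF X Y l)) -> negf x ->
  (forall z, In z (y :: ys) -> negf z) -> nd T G (Imp x (dis (y :: ys))) ->
  nd T G (dis [seq Imp x z | z <- y :: ys]).
Proof.
move=> HS HND Hx Hz H.
have HG : nd T G (GF (Neg x) (Neg y) [seq Neg z | z <- ys]) by apply: nd_thm.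
rewrite /GF in HG.
have key : forall z, In z (y :: ys) ->
    nd T (Imp (Neg (Neg x)) (Neg (Neg z)) :: G) (dis [seq Imp x z | z <- y :: ys]).
  move=> z Hin; apply: (dis_I (z := Imp x z)); first exact: in_map_seq.
  apply: nd_impI; use (Neg (Neg z)); first by apply: neg_stable => //; apply: Hz.
  use (Neg (Neg x)); first hyp.
  apply: nd_impI; use x; hyp.
apply: (bigOr_E (nd_impE HG _)).
- apply: nd_impI.
  apply: (dis_E (l := y :: ys)).
    use x; first by apply: wk; apply: H.
    use (Neg (Neg x)); [exact: neg_stable | hyp].
  move=> z Hin; apply: (bigOr_I (z := Neg (Neg z))).
    case: Hin => [<-|Hin]; first by left.
    right; apply: (in_map_seq (fun q => Neg q)); exact: (in_map_seq (fun q => Neg q)).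
  apply: nd_impI; use z; hyp.
- move=> w /= [<-|Hw]; first by apply: key; left.
  have [q [Hq ->]] := in_map_inv Hw.
  have [z [Hz' ->]] := in_map_inv Hq.
  by apply: key; right.
Qed.

Fixpoint andN (xs ys : seq form) : seq form :=
  match xs with [::] => [::] | x :: xs' => [seq And x y | y <- ys] ++ andN xs' ys end.
Fixpoint impN (xs ys : seq form) : seq form :=
  match xs with [::] => [:: Top] | x :: xs' => andN [seq Imp x y | y <- ys] (impN xs' ys) end.
Fixpoint NF (f : form) : seq form :=
  match f with
  | Var p => [:: Var p]
  | Bot => [:: Bot]
  | Top => [:: Top]
  | And a b => andN (NF a) (NF b)
  | Or a b => NF a ++ NF b
  | Imp a b => impN (NF a) (NF b)
  end.

Lemma in_andN xs ys w : In w (andN xs ys) <-> exists x y, In x xs /\ In y ys /\ w = And x y.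
Proof.
elim: xs => [|x xs IH] /=; first by split=> // [[x [y [[] _]]]].
rewrite in_cat IH; split.
- case=> [Hw|[x' [y [H1 [H2 ->]]]]].
    have [y [Hy ->]] := in_map_inv Hw; exists x, y; auto.
  by exists x', y; auto.
- case=> [x' [y [[<-|H1] [H2 ->]]]].
    by left; exact: (in_map_seq (fun y => And x y) H2).
  by right; exists x', y.
Qed.

Lemma andN_ne x xs y ys : exists h t, andN (x :: xs) (y :: ys) = h :: t.
Proof. by rewrite /=; eexists; eexists. Qed.

Lemma impN_ne xs y ys : exists h t, impN xs (y :: ys) = h :: t.
Proof. case: xs => [|x xs] /=; first by eexists; eexists.
have [h [t ->]] : exists h t, impN xs (y :: ys) = h :: t.
  elim: xs => [|x' xs' [h' [t' E]]] /=; first by eexists; eexists.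
  by rewrite E; eexists; eexists.
by eexists; eexists. Qed.

Lemma NF_ne f : exists h t, NF f = h :: t.
Proof.
elim: f => /= [p|||a [h1 [t1 ->]] b [h2 [t2 ->]]|a [h1 [t1 ->]] b [h2 [t2 ->]]|a [h1 [t1 ->]] b [h2 [t2 ->]]];
  try by eexists; eexists.
by apply: impN_ne.
Qed.

Lemma impN_neg xs ys r : (forall x, In x xs -> negf x) -> (forall y, In y ys -> negf y) ->
  In r (impN xs ys) -> negf r.
Proof.
elim: xs r => [|x xs IH] r /= Hx Hy; first by case=> // <-.
case/in_andN=> [u [r' [Hu [Hr' ->]]]] /=.
have [y [Hy' ->]] := in_map_inv Hu; split; first by split; auto.
by apply: IH => // x' Hx'; auto.
Qed.

Lemma NF_neg f z : In z (NF f) -> negf z.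
Proof.
elim: f z => [p|||a IHa b IHb|a IHa b IHb|a IHa b IHb] z /=.
- by case=> // <-.
- by case=> // <-.
- by case=> // <-.
- by case/in_andN=> [x [y [Hx [Hy ->]]]] /=; auto.
- by case/in_cat; auto.
- by apply: impN_neg.
Qed.

Lemma impN_intro T xs ys G : (forall x, In x xs -> nd T G (dis [seq Imp x y | y <- ys])) ->
  nd T G (dis (impN xs ys)).
Proof.
elim: xs G => [|x xs IH] G /= H.
  by apply: nd_orI1; apply: nd_topI.
apply: (dis_E (H x (or_introl erefl))) => w Hw.
apply: (dis_E (IH (w :: G) _)).
  by move=> x' Hx'; apply: wk; apply: H; right.
move=> r Hr; apply: (dis_I (z := And w r)).
  by apply/in_andN; exists w, r.
by apply: nd_andI; hyp.
Qed.

Lemma impN_elim T xs ys r x : In r (impN xs ys) -> In x xs ->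
  exists y, In y ys /\ forall G, nd T G (Imp r (Imp x y)).
Proof.
elim: xs r => [|x0 xs IH] r //= /in_andN [u [r' [Hu [Hr' ->]]]] [E|Hx].
- subst x0; have [y [Hy ->]] := in_map_inv Hu.
  by exists y; split => // G; apply: nd_impI; apply: nd_andE1; hyp.
- have [y [Hy Hp]] := IH r' Hr' Hx.
  exists y; split => // G; apply: nd_impI; use r'; first exact: Hp.
  by apply: nd_andE2; hyp.
Qed.

Lemma NF_ok T f : stabT T -> (forall X Y l, T (GF X Y l)) ->
  (forall G, nd T G (Imp f (dis (NF f)))) /\ (forall z G, In z (NF f) -> nd T G (Imp z f)).
Proof.
move=> HS HND.
elim: f => [p|||a [IHa1 IHa2] b [IHb1 IHb2]|a [IHa1 IHa2] b [IHb1 IHb2]|a [IHa1 IHa2] b [IHb1 IHb2]] /=.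
- split=> [G|z G [<-|[]]]; apply: nd_impI; last by hyp.
  by apply: nd_orI1; hyp.
- split=> [G|z G [<-|[]]]; apply: nd_impI; last by hyp.
  by apply: nd_orI1; hyp.
- split=> [G|z G [<-|[]]]; apply: nd_impI; last by hyp.
  by apply: nd_orI1; hyp.
- split=> [G|z G].
    apply: nd_impI; apply: (dis_E (l := NF a)).
      by use a; [apply: IHa1 | apply: nd_andE1; hyp].
    move=> x Hx; apply: (dis_E (l := NF b)).
      by use b; [apply: IHb1 | apply: nd_andE2; hyp].
    move=> y Hy; apply: (dis_I (z := And x y)); first by apply/in_andN; exists x, y.
    by apply: nd_andI; hyp.
  case/in_andN=> [x [y [Hx [Hy ->]]]].
  apply: nd_impI; apply: nd_andI.
    by use x; [apply: IHa2 | apply: nd_andE1; hyp].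
  by use y; [apply: IHb2 | apply: nd_andE2; hyp].
- split=> [G|z G].
    apply: nd_impI; apply: nd_orE; first by hyp.
      apply: (dis_E (l := NF a)); first by use a; [apply: IHa1 | hyp].
      move=> z Hz; apply: (dis_I (z := z)); [by apply/in_cat; left | hyp].
    apply: (dis_E (l := NF b)); first by use b; [apply: IHb1 | hyp].
    move=> z Hz; apply: (dis_I (z := z)); [by apply/in_cat; right | hyp].
  case/in_cat=> Hz; apply: nd_impI.
    by apply: nd_orI1; use z; [apply: IHa2 | hyp].
  by apply: nd_orI2; use z; [apply: IHb2 | hyp].
- split=> [G|z G].
    apply: nd_impI; apply: impN_intro => x Hx.
    have [y [ys E]] := NF_ne b; rewrite E.
    apply: ND_step => //; first exact: NF_neg Hx.
      by move=> z; rewrite -E; apply: NF_neg.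
    rewrite -E; apply: nd_impI; use b; first exact: IHb1.
    use a; first hyp.
    by use x; [apply: IHa2 | hyp].
  move=> Hz; apply: nd_impI; apply: nd_impI.
  apply: (dis_E (l := NF a)); first by use a; [apply: IHa1 | hyp].
  move=> x Hx; have [y [Hy Hp]] := impN_elim T Hz Hx.
  use y; first exact: IHb2.
  use x; last by hyp.
  by use z; [apply: Hp | hyp].
Qed.

Lemma derives_thm T x y : thy T -> derives T (single x) y -> T x -> T y.
Proof. case=> _ Hm H Hx; elim: H => // [f ->|a b _ H1 _ H2] //; exact: Hm H1 H2. Qed.

Lemma negf_subst s f : (forall p, negf (s p)) -> negf f -> negf (subst s f).
Proof. move=> Hs; elim: f => //= [a IHa b IHb|a IHa b IHb] [Ha Hb]; auto. Qed.

Lemma subst_equiv T G s : (forall p, nd T G (Imp (s p) (Var p))) ->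
  (forall p, nd T G (Imp (Var p) (s p))) ->
  forall f G', (forall g, In g G -> In g G') ->
    nd T G' (Imp (subst s f) f) /\ nd T G' (Imp f (subst s f)).
Proof.
move=> H1 H2; elim=> [p|||a IHa b IHb|a IHa b IHb|a IHa b IHb] G' HG /=.
- by split; [apply: (nd_weak (H1 p)) | apply: (nd_weak (H2 p))].
- by split; apply: nd_impI; hyp.
- by split; apply: nd_impI; hyp.
- have HG1 : forall g, In g G -> In g (And (subst s a) (subst s b) :: G') by move=> g /= Hg; auto.
  have HG2 : forall g, In g G -> In g (And a b :: G') by move=> g /= Hg; auto.
  split; apply: nd_impI; apply: nd_andI.
  + by use (subst s a); [apply: (proj1 (IHa _ HG1)) | apply: nd_andE1; hyp].
  + by use (subst s b); [apply: (proj1 (IHb _ HG1)) | apply: nd_andE2; hyp].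
  + by use a; [apply: (proj2 (IHa _ HG2)) | apply: nd_andE1; hyp].
  + by use b; [apply: (proj2 (IHb _ HG2)) | apply: nd_andE2; hyp].
- split; apply: nd_impI; (apply: nd_orE; first by hyp).
  + apply: nd_orI1; use (subst s a); last by hyp.
    by apply: (proj1 (IHa _ _)) => g /= Hg; auto.
  + apply: nd_orI2; use (subst s b); last by hyp.
    by apply: (proj1 (IHb _ _)) => g /= Hg; auto.
  + apply: nd_orI1; use a; last by hyp.
    by apply: (proj2 (IHa _ _)) => g /= Hg; auto.
  + apply: nd_orI2; use b; last by hyp.
    by apply: (proj2 (IHb _ _)) => g /= Hg; auto.
- split; apply: nd_impI; apply: nd_impI.
  + use (subst s b); first by apply: (proj1 (IHb _ _)) => g /= Hg; auto.
    use (subst s a); first hyp.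
    by use a; [apply: (proj2 (IHa _ _)) => g /= Hg; auto | hyp].
  + use b; first by apply: (proj2 (IHb _ _)) => g /= Hg; auto.
    use a; first hyp.
    by use (subst s a); [apply: (proj1 (IHa _ _)) => g /= Hg; auto | hyp].
Qed.

Lemma stab_sg A p c : c = Top \/ c = Bot ->
  nd IPC [::] (Iff (And (Imp A (Neg (Var p))) (Imp (Neg A) c))
                   (Neg (Neg (And (Imp A (Neg (Var p))) (Imp (Neg A) c))))).
Proof.
case=> ->; set X := And _ _;
(apply: nd_andI; apply: nd_impI;
  [ by apply: nd_impI; use X; hyp | ];
apply: nd_andI; apply: nd_impI;
  [ apply: nd_impI; apply: (nd_botE); use (Neg X); first hyp;
    apply: nd_impI; use (Var p); last hyp;
    use A; last hyp;
    by apply: nd_andE1; apply: nd_hyp; rewrite /X /=; auto | ]).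
  exact: nd_topI.
use (Neg X); first hyp.
apply: nd_impI; use (Neg A); last hyp.
by apply: nd_andE2; apply: nd_hyp; rewrite /X /=; auto.
Qed.

Lemma core L : (forall f, ND f -> L f) ->
  hereditarily_structurally_complete (neg_variant L) (stable_in (neg_variant L)).
Proof.
move=> HL T' hT' Hsub Hcl a b H.
have hT : thy T' by case: hT' => Hm Hi _; split.
have ndL : forall f, nd IPC [::] (subst neg_sub f) -> T' f.
  by move=> f Hf; apply: Hsub; apply: HL; apply: ax_ipc; apply: nd_sound0 thy_IPC Hf.
have HS : stabT T'.
  move=> p; apply: ndL => /=; apply: nd_andI; apply: nd_impI; apply: nd_impI.
    by use (Neg (Var p)); hyp.
  by use (Neg (Neg (Var p))); [hyp | apply: nd_impI; use (Var p); hyp].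
have HND : forall X Y l, T' (GF X Y l).
  move=> X Y l; apply: Hsub; rewrite /neg_variant.
  have [s [k [Hk <-]]] := GF_inst X Y l.
  by rewrite subst_comp; apply: HL; apply: ax_inst; exists k.
have [HNF1 HNF2] := NF_ok a HS HND.
have Hgb : forall g, In g (NF a) -> T' (Imp g b).
  move=> g Hg; have Hng := NF_neg Hg.
  case: (classic (exists e, beval e g)) => [[e He]|Hno].
  - pose sg p := And (Imp g (Var p)) (Imp (Neg g) (if e p then Top else Bot)).
    have Hst : stable_in (neg_variant L) sg.
      move=> p; rewrite /neg_variant; apply: HL; apply: ax_ipc; apply: nd_sound0 thy_IPC _.
      by rewrite /sg /=; case: (e p) => /=; apply: stab_sg; auto.
    have Hsg : T' (subst sg g).
      apply: neg_complete hT HS _ _.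
        by apply: negf_subst => // p; rewrite /sg /=; case: (e p).
      move=> v; rewrite beval_subst.
      case Hv: (beval v g).
        by rewrite -Hv; apply: beval_ext => n; rewrite /sg /= Hv /=; case: (v n).
      by rewrite -He; apply: beval_ext => n; rewrite /sg /= Hv /=; case: (e n).
    have Hga : T' (Imp g a) by apply: nd_sound0 hT (HNF2 g [::] Hg).
    have Hsa : T' (subst sg a).
      apply: (derives_thm hT _ Hsg); apply: (Hcl sg Hst g a).
      by apply: der_mp (der_thm _ Hga) (der_hyp _ _).
    have Hsb := H sg Hst Hsa.
    apply: nd_sound0 hT _; apply: nd_impI.
    use (subst sg b); last by apply: nd_thm.
    apply: (proj1 (subst_equiv (G := [:: g]) _ _ _ _)) => //.
    + move=> p; apply: nd_impI; use g; last hyp.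
      by apply: nd_andE1; apply: nd_hyp; rewrite /sg /=; auto.
    + move=> p; rewrite /sg; apply: nd_impI; apply: nd_andI; apply: nd_impI; first hyp.
      by apply: nd_botE; use g; hyp.
  - have Hng' : T' (Neg g).
      apply: neg_complete hT HS _ _; first by split.
      move=> v /=; case Hv: (beval v g) => //.
      by exfalso; apply: Hno; exists v.
    apply: nd_sound0 hT _; apply: nd_impI; apply: nd_botE.
    by use g; [apply: nd_thm | hyp].
have Hab : T' (Imp a b).
  apply: nd_sound0 hT _; apply: nd_impI.
  apply: (dis_E (l := NF a)); first by use a; [apply: HNF1 | hyp].
  by move=> g Hg; use g; [apply: nd_thm; apply: Hgb | hyp].
by apply: der_mp (der_thm _ Hab) (der_hyp _ _).
Qed.

Lemma thy_KP : thy KP. Proof. split; [exact: ax_ipc | exact: ax_mp]. Qed.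

Lemma KP_GF X Y l G : nd KP G (GF X Y l).
Proof.
elim: l Y G => [|q l IH] Y G; rewrite /GF /=; first by apply: nd_impI; hyp.
pose s n := match n with 0 => X | 1 => Neg Y | _ => bigOr (Neg q) [seq Neg z | z <- l] end.
have K : KP (subst s KP_axiom) by apply: ax_inst.
apply: nd_impI.
apply: nd_orE; first by use (Imp (Neg X) (Or (Neg Y) (bigOr (Neg q) [seq Neg z | z <- l])));
  [apply: nd_thm; exact: K | hyp].
  by apply: nd_orI1; hyp.
apply: nd_orI2; use (Imp (Neg X) (bigOr (Neg q) [seq Neg z | z <- l])); last hyp.
exact: (IH q).
Qed.

Lemma ND_KP f : ND f -> KP f.
Proof.
elim=> [g Hg|s g [k [Hk ->]]|a b _ IH1 _ IH2].
- exact: ax_ipc.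
- rewrite ND_GF_eq; apply: nd_sound0 thy_KP _; exact: KP_GF.
- exact: ax_mp IH1 IH2.
Qed.

Lemma mpers n (V : nat -> {set 'I_n} -> Prop) : persistent V ->
  forall f (x y : {set 'I_n}), x != set0 -> y != set0 -> y \subset x ->
  mforces V x f -> mforces V y f.
Proof.
move=> HV; elim=> [p|||a IHa b IHb|a IHa b IHb|a IHa b IHb] x y Hx Hy Hyx //=.
- exact: HV.
- by case=> Ha Hb; split; [apply: IHa Hyx Ha | apply: IHb Hyx Hb].
- by case=> [Ha|Hb]; [left; apply: IHa Hyx Ha | right; apply: IHb Hyx Hb].
- move=> H z Hz Hzy; apply: H Hz _; exact: subset_trans Hzy Hyx.
Qed.
Arguments mpers {n V} HV {f x y}.

Lemma IPC_ML f : IPC f -> ML f.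
Proof.
move=> H n V HV; elim: H => /=.
- move=> a b x Hx y Hy Hyx Ha z Hz Hzy Hb; exact: (mpers HV Hy Hz Hzy Ha).
- move=> a b c x Hx y Hy Hyx H1 z Hz Hzy H2 w Hw Hwz Ha.
  apply: (H1 w Hw (subset_trans Hwz Hzy) Ha w Hw (subxx w)).
  exact: (H2 w Hw Hwz Ha).
- by move=> a b x Hx y Hy Hyx [].
- by move=> a b x Hx y Hy Hyx [].
- move=> a b x Hx y Hy Hyx Ha z Hz Hzy Hb; split => //; exact: (mpers HV Hy Hz Hzy Ha).
- by move=> a b x Hx y Hy Hyx Ha; left.
- by move=> a b x Hx y Hy Hyx Ha; right.
- move=> a b c x Hx y Hy Hyx H1 z Hz Hzy H2 w Hw Hwz [Ha|Hb].
    exact: (H1 w Hw (subset_trans Hwz Hzy) Ha).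
  exact: (H2 w Hw Hwz Hb).
- by move=> a x Hx y Hy Hyx [].
- by [].
- move=> a b _ IH1 _ IH2 x Hx; exact: (IH1 x Hx x Hx (subxx x) (IH2 x Hx)).
Qed.

Lemma mforces_bigOr n (V : nat -> {set 'I_n} -> Prop) x h l :
  mforces V x (bigOr h l) <-> exists z, In z (h :: l) /\ mforces V x z.
Proof.
elim: l h => [|y l IH] h /=.
  by split=> [H|[z [[<-|[]] H]]] //; exists h; auto.
rewrite IH; split.
- case=> [H|[z [Hz H]]]; first by exists h; auto.
  by exists z; auto.
- case=> z [[<-|Hz] H]; first by left.
  by right; exists z.
Qed.

Definition dec (P : Prop) : bool := if excluded_middle_informative P then true else false.

Lemma decP P : reflect P (dec P).
Proof. rewrite /dec; case: excluded_middle_informative => H; by constructor. Qed.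

Lemma ML_GF X Y l : ML (GF X Y l).
Proof.
move=> n V HV x0 Hx0 x Hx _ H.
pose S := [set i in x | dec (mforces V [set i] (Neg X))].
have HA : forall y : {set 'I_n}, y != set0 -> y \subset x -> mforces V y (Neg X) -> y \subset S.
  move=> y Hy Hyx HyX; apply/subsetP => i Hi; rewrite inE; apply/andP; split.
    exact: (subsetP Hyx).
  apply/decP; apply: (mpers HV Hy _ _ HyX).
    by apply/set0Pn; exists i; rewrite inE.
  by rewrite sub1set.
have HSx : S \subset x by apply/subsetP => i; rewrite inE => /andP[].
have HB : S != set0 -> mforces V S (Neg X).
  move=> HS z Hz HzS HzX.
  have [i Hi] := set0Pn _ Hz.
  have Hi1 : [set i] != set0 by apply/set0Pn; exists i; rewrite inE.
  have HiX : mforces V [set i] X by apply: (mpers HV Hz Hi1 _ HzX); rewrite sub1set.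
  have := subsetP HzS i Hi; rewrite inE => /andP [_ /decP Hn].
  exact: Hn [set i] Hi1 (subxx _) HiX.
case: (boolP (S == set0)) => HS.
- apply/mforces_bigOr; exists (Imp (Neg X) (Neg Y)); split; first by left.
  move=> y Hy Hyx HyX; have := HA y Hy Hyx HyX.
  by rewrite (eqP HS) subset0 (negbTE Hy).
- have := H S HS HSx (HB HS); case/mforces_bigOr => z [Hz Hfz].
  have [q [Hq Ez]] : exists q, In q (Y :: l) /\ z = Neg q.
    case: Hz => [<-|Hz]; first by exists Y; split; [left|].
    by have [q [Hq ->]] := in_map_inv Hz; exists q; split; [right|].
  subst z; apply/mforces_bigOr; exists (Imp (Neg X) (Neg q)); split.
    case: Hq => [<-|Hq]; first by left.
    by right; exact: (in_map_seq (fun q => Imp (Neg X) (Neg q))).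
  move=> y Hy Hyx HyX; exact: (mpers HV HS Hy (HA y Hy Hyx HyX) Hfz).
Qed.

Lemma ND_ML f : ND f -> ML f.
Proof.
elim=> [g Hg|s g [k [Hk ->]]|a b _ IH1 _ IH2].
- exact: IPC_ML.
- rewrite ND_GF_eq; exact: ML_GF.
- move=> n V HV x Hx; exact: (IH1 n V HV x Hx x Hx (subxx x) (IH2 n V HV x Hx)).
Qed.

Theorem theorem5p5 :
  (forall L : fset, intermediate_logic L -> (forall f, ND f -> L f) ->
     hereditarily_structurally_complete (neg_variant L) (stable_in (neg_variant L))) /\
  hereditarily_structurally_complete (neg_variant ND) (stable_in (neg_variant ND)) /\
  hereditarily_structurally_complete (neg_variant KP) (stable_in (neg_variant KP)) /\
  hereditarily_structurally_complete (neg_variant ML) (stable_in (neg_variant ML)).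
Proof.
split; first by move=> L _ HL; apply: core.
split; first by apply: core.
split; [exact: core ND_KP | exact: core ND_ML].
Qed.
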